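(* Let $\underline{A}=(A_1,\dots,A_k)$ be a locally constant cocycle over a Bernoulli shift on $\{1,\dots,k\}^{\mathbb Z}$ with $\mathrm{rank}(A_i)=1$ for all $i$. Then either $d(\mathscr{K}(\underline{A}),\mathscr{R}(\underline{A}))>0$ and $\underline{A}$ is projectively uniformly hyperbolic, or $d(\mathscr{K}(\underline{A}),\mathscr{R}(\underline{A}))=0$, $\underline{A}$ admits a null word, and $L_1(\underline{A})=-\infty$.
   Context: Base: $X=\{1,\dots,k\}^{\mathbb Z}$ with Bernoulli measure $p^{\mathbb Z}$ ($p_i>0$), $\sigma$ the shift; cocycle $F(\omega,v)=(\sigma\omega,A_{\omega_1}v)$, $A^n(\omega)=A_{\omega_n}\cdots A_{\omega_1}$, $L_1=\lim_n\frac1n\log\|A^n(\omega)\|\in[-\infty,\infty)$ a.e. $\mathscr{K}(\underline A)=\{\mathrm{Ker}A_i\}_i$ and $\mathscr{R}(\underline A)=\{\mathrm{Range}A_i\}_i$, finite subsets of the projective line $\mathbb{P}^1$, and $d$ is the distance between these sets for a standard metric on $\mathbb{P}^1$. A null word is a finite word $\omega_1\dots\omega_n$ with $A_{\omega_n}\cdots A_{\omega_1}=0$. Projectively uniformly hyperbolic: continuous invariant line fields $E_0,E_1$ with $\mathbb R^2=E_0(\omega)\oplus E_1(\omega)$ and $n$ with $\|A^n(\omega)|_{E_0}\|<\|A^n(\omega)|_{E_1}\|$ for all $\omega$. *)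

(* Defs.v *)
From HB Require Import structures.
From mathcomp Require Import all_boot all_order all_algebra.
From mathcomp Require Import all_classical all_reals all_analysis.
Set Implicit Arguments. Unset Strict Implicit. Unset Printing Implicit Defensive.
Import Order.TTheory GRing.Theory Num.Theory.
Local Open Scope ring_scope.
Local Open Scope classical_set_scope.

(* Base space X = {1,...,k}^Z with k = n.+1; symbols are 'I_n.+1 (0-based). *)
Definition seqspace (n : nat) := int -> 'I_n.+1.
HB.instance Definition _ (n : nat) := Choice.on (seqspace n).
HB.instance Definition _ (n : nat) :=
  isPointed.Build (seqspace n) (fun _ => ord0).

Definition shift (n : nat) (w : seqspace n) : seqspace n := fun i => w (i + 1)%R.

Fixpoint cocycle (R : realType) (n : nat) (A : 'I_n.+1 -> 'M[R]_2)
  (w : seqspace n) (m : nat) : 'M[R]_2 :=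
  match m with
  | O => 1%:M
  | S m' => A (w (Posz m'.+1)) *m cocycle A w m'
  end.

(* product A_{a_m} ... A_{a_1} along a finite word [a_1; ...; a_m] *)
Definition wordprod (R : realType) (n : nat) (A : 'I_n.+1 -> 'M[R]_2)
  (s : seq 'I_n.+1) : 'M[R]_2 := foldl (fun M i => A i *m M) 1%:M s.

Definition null_word (R : realType) (n : nat) (A : 'I_n.+1 -> 'M[R]_2) :=
  exists s : seq 'I_n.+1, wordprod A s = 0.

Definition enorm (R : realType) (v : 'cV[R]_2) : R := Num.sqrt (\sum_i v i 0 ^+ 2).
Definition opnorm (R : realType) (M : 'M[R]_2) : R :=
  sup [set enorm (M *m v) | v in [set v : 'cV[R]_2 | enorm v = 1]].

(* standard metric on P^1: sine of the angle between the lines spanned by u, v *)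
Definition pdist (R : realType) (u v : 'cV[R]_2) : R :=
  `|u 0 0 * v 1 0 - u 1 0 * v 0 0| / (enorm u * enorm v).

Definition dist_ker_range (R : realType) (n : nat) (A : 'I_n.+1 -> 'M[R]_2) : R :=
  inf [set pdist u v | u in [set u : 'cV[R]_2 | u != 0 /\ exists i, A i *m u = 0]
                     & v in [set v : 'cV[R]_2 | v != 0 /\ exists j x, v = A j *m x]].

(* a line field X -> P^1 is given by a nowhere vanishing spanning vector field *)
Definition line_field_continuous (R : realType) (n : nat) (e : seqspace n -> 'cV[R]_2) :=
  forall w (eps : R), 0 < eps -> exists N : nat, forall w' : seqspace n,
    (forall i : int, (`|i| <= N)%N -> w' i = w i) -> pdist (e w) (e w') < eps.

Definition line_field_invariant (R : realType) (n : nat) (A : 'I_n.+1 -> 'M[R]_2)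
  (e : seqspace n -> 'cV[R]_2) :=
  forall w, exists c : R, A (w 1%R) *m e w = c *: e (shift w).

Definition line_norm (R : realType) (M : 'M[R]_2) (v : 'cV[R]_2) : R :=
  enorm (M *m v) / enorm v.

Definition proj_unif_hyperbolic (R : realType) (n : nat) (A : 'I_n.+1 -> 'M[R]_2) :=
  exists e0 e1 : seqspace n -> 'cV[R]_2,
    [/\ forall w, e0 w != 0 /\ e1 w != 0,
        line_field_continuous e0 /\ line_field_continuous e1,
        line_field_invariant A e0 /\ line_field_invariant A e1,
        (* R^2 = E0(w) (+) E1(w) *)
        forall w, \det (row_mx (e0 w) (e1 w)) != 0 &
        exists m : nat, forall w,
          line_norm (cocycle A w m) (e0 w) < line_norm (cocycle A w m) (e1 w)].

Definition cylinder (n : nat) (m : int) (s : seq 'I_n.+1) : set (seqspace n) :=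
  [set w | forall j : nat, (j < size s)%N -> w (m + Posz j)%R = nth ord0 s j].

Definition cylinders (n : nat) : set (set (seqspace n)) :=
  [set C | exists m s, C = cylinder m s].

(* X with the product sigma-algebra (generated by cylinders) *)
Definition Xmeas (n : nat) := g_sigma_algebraType (@cylinders n).

Definition bernoulli_measure (R : realType) (n : nat) (p : 'I_n.+1 -> R)
  (P : probability (Xmeas n) R) :=
  forall (m : int) (s : seq 'I_n.+1),
    P (cylinder m s) = (\prod_(i <- s) p i)%:E.

Definition elog (R : realType) (x : R) : \bar R :=
  if 0 < x then (ln x)%:E else -oo%E.

Definition lyap_seq (R : realType) (n : nat) (A : 'I_n.+1 -> 'M[R]_2)
  (w : seqspace n) (m : nat) : \bar R :=
  ((m%:R)^-1)%:E * elog (opnorm (cocycle A w m)).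

(* Main.v *)
Require Import Defs.
From HB Require Import structures.
From mathcomp Require Import all_boot all_order all_algebra.
From mathcomp Require Import all_classical all_reals all_analysis.
From mathcomp Require Import ring lra.
Import Order.TTheory GRing.Theory Num.Theory.
Local Open Scope ring_scope.
Local Open Scope classical_set_scope.

Section Alg.
Variable R : realType.
Implicit Types (u v : 'cV[R]_2) (M : 'M[R]_2) (rho : 'rV[R]_2).

Lemma I2 (i : 'I_2) : i = 0 \/ i = 1.
Proof. case: i => [[|[|k]] Hi] //; [left|right]; exact: val_inj. Qed.

Lemma wid0 : widen_ord (leqnSn 1) ord0 = 0 :> 'I_2. Proof. exact: val_inj. Qed.
Lemma omax1 : ord_max = 1 :> 'I_2. Proof. exact: val_inj. Qed.
Lemma lift01 : lift ord0 ord0 = 1 :> 'I_2. Proof. exact: val_inj. Qed.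

Lemma cV2P u v : u 0 0 = v 0 0 -> u 1 0 = v 1 0 -> u = v.
Proof. by move=> h0 h1; apply/matrixP => a b; rewrite (ord1 b); case: (I2 a) => ->. Qed.

Lemma cV2_neq0 u : u != 0 -> 0 < u 0 0 ^+ 2 + u 1 0 ^+ 2.
Proof.
move=> u0; rewrite lt_def addr_ge0 ?sqr_ge0 // andbT paddr_eq0 ?sqr_ge0 // !sqrf_eq0.
apply: contra u0 => /andP[/eqP a /eqP b]; apply/eqP; apply: cV2P; by rewrite ?mxE.
Qed.

Lemma enormE u : enorm u = Num.sqrt (u 0 0 ^+ 2 + u 1 0 ^+ 2).
Proof. by rewrite /enorm big_ord_recr big_ord1 /= wid0 omax1. Qed.

Lemma enorm_gt0 u : u != 0 -> 0 < enorm u.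
Proof. by move=> /cV2_neq0 h; rewrite enormE sqrtr_gt0. Qed.

Lemma enorm0 : enorm (0 : 'cV[R]_2) = 0.
Proof. by rewrite enormE !mxE expr0n /= addr0 sqrtr0. Qed.

Lemma det2E M : \det M = M 0 0 * M 1 1 - M 0 1 * M 1 0.
Proof.
rewrite (expand_det_row _ 0) big_ord_recr big_ord1 /= /cofactor !det_mx11 !mxE /= wid0 omax1.
have -> : lift (0:'I_2) (0:'I_1) = 1 by exact: val_inj.
have -> : lift (1:'I_2) (0:'I_1) = 0 by exact: val_inj.
rewrite expr0 expr1; ring.
Qed.


Lemma mulcrE (r : 'cV[R]_2) rho a b : (r *m rho) a b = r a 0 * rho 0 b.
Proof. by rewrite !mxE big_ord1 (ord1 0). Qed.

Lemma mulMvE (M : 'M[R]_(1 + 1)) u a : (M *m u) a 0 = M a 0 * u 0 0 + M a 1 * u 1 0.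
Proof. by rewrite !mxE big_ord_recr big_ord1 /= wid0 omax1. Qed.

Definition dot rho u := rho 0 0 * u 0 0 + rho 0 1 * u 1 0.

Lemma mulrvE rho u : rho *m u = (dot rho u)%:M.
Proof. by apply/matrixP => a b; rewrite (ord1 a) (ord1 b) !mxE big_ord_recr big_ord1 /= wid0 omax1 mulr1n. Qed.

Lemma rank1_fact M : \rank M = 1%N ->
  exists r rho, [/\ r != 0, rho != 0 & M = r *m rho].
Proof.
move=> rk; have := mulmx_base M; move: (col_base M) (row_base M); rewrite rk => c r E.
have M0 : M != 0 by rewrite -mxrank_eq0 rk.
exists c, r; split => //; apply: contraNneq M0 => h; by rewrite -E h ?mul0mx ?mulmx0.
Qed.


Definition vec2 (a b : R) : 'cV[R]_2 := \col_(i < 2) (if i == 0 then a else b).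
Lemma vec2_0 a b : vec2 a b 0 0 = a. Proof. by rewrite mxE. Qed.
Lemma vec2_1 a b : vec2 a b 1 0 = b. Proof. by rewrite mxE. Qed.

Definition Nr rho := rho 0 0 ^+ 2 + rho 0 1 ^+ 2.

Lemma rV2_neq0 rho : rho != 0 -> 0 < Nr rho.
Proof.
move=> u0; rewrite lt_def addr_ge0 ?sqr_ge0 // andbT paddr_eq0 ?sqr_ge0 // !sqrf_eq0.
apply: contra u0 => /andP[/eqP a /eqP b]; apply/eqP; apply/matrixP => i j.
by rewrite (ord1 i) !mxE; case: (I2 j) => ->.
Qed.

Lemma Auv (r : 'cV[R]_2) rho u : (r *m rho) *m u = dot rho u *: r.
Proof. by rewrite -mulmxA mulrvE mul_mx_scalar. Qed.

Lemma pdist_formula rho u r s : rho != 0 -> u != 0 -> r != 0 -> s != 0 ->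
  dot rho u = 0 ->
  pdist u (s *: r) = `|dot rho r| / (Num.sqrt (Nr rho) * Num.sqrt (r 0 0 ^+ 2 + r 1 0 ^+ 2)).
Proof.
move=> rh0 u0 r0 s0 Z.
have Nrh := rV2_neq0 _ rh0; have Nu := cV2_neq0 _ u0; have Nrr := cV2_neq0 _ r0.
move: Z; rewrite /pdist !enormE !mxE /dot /Nr in Nrh *.
set p0 := rho 0 0; set p1 := rho 0 1; set a0 := u 0 0; set a1 := u 1 0.
set b0 := r 0 0; set b1 := r 1 0 => Z.
have -> : (s * b0) ^+ 2 + (s * b1) ^+ 2 = s ^+ 2 * (b0 ^+ 2 + b1 ^+ 2) by ring.
rewrite sqrtrM ?sqr_ge0 // sqrtr_sqr.
have -> : a0 * (s * b1) - a1 * (s * b0) = s * (a0 * b1 - a1 * b0) by ring.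
rewrite normrM.
have key : `|a0 * b1 - a1 * b0| * Num.sqrt (p0 ^+ 2 + p1 ^+ 2) =
           `|p0 * b0 + p1 * b1| * Num.sqrt (a0 ^+ 2 + a1 ^+ 2).
  rewrite -!sqrtr_sqr -!sqrtrM ?sqr_ge0 //; congr Num.sqrt.
  have E1 : (p0 ^+ 2 + p1 ^+ 2) * (a0 * b1 - a1 * b0) =
      (p0 * a0 + p1 * a1) * (p0 * b1 - p1 * b0) - (p0 * a1 - p1 * a0) * (p0 * b0 + p1 * b1) by ring.
  have E2 : (p0 * a1 - p1 * a0) ^+ 2 = (p0 ^+ 2 + p1 ^+ 2) * (a0 ^+ 2 + a1 ^+ 2) - (p0 * a0 + p1 * a1) ^+ 2 by ring.
  rewrite Z mul0r sub0r in E1; rewrite Z expr0n /= subr0 in E2.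
  apply: (mulfI (x := p0 ^+ 2 + p1 ^+ 2)); first by rewrite gt_eqF.
  transitivity (((p0 ^+ 2 + p1 ^+ 2) * (a0 * b1 - a1 * b0)) ^+ 2); first by ring.
  rewrite E1 sqrrN exprMn E2; ring.
have sq0 : Num.sqrt (p0 ^+ 2 + p1 ^+ 2) != 0 by rewrite gt_eqF // sqrtr_gt0.
have sq1 : Num.sqrt (a0 ^+ 2 + a1 ^+ 2) != 0 by rewrite gt_eqF // sqrtr_gt0.
have sq2 : Num.sqrt (b0 ^+ 2 + b1 ^+ 2) != 0 by rewrite gt_eqF // sqrtr_gt0.
have ns : `|s| != 0 by rewrite normr_eq0.
have -> : `|a0 * b1 - a1 * b0| = `|p0 * b0 + p1 * b1| * Num.sqrt (a0 ^+ 2 + a1 ^+ 2) / Num.sqrt (p0 ^+ 2 + p1 ^+ 2).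
  by rewrite -key mulfK.
by field; rewrite ?sq0 ?sq1 ?sq2 ?ns.
Qed.

End Alg.
Arguments vec2 {R}. Arguments dot {R}. Arguments Nr {R}.
Arguments cV2_neq0 {R}. Arguments rV2_neq0 {R}. Arguments enorm_gt0 {R}.
Arguments rank1_fact {R}. Arguments pdist_formula {R}. Arguments Auv {R}.
Arguments mulrvE {R}.

Section Meas.
Variables (R : realType) (n : nat).
Variables (j i : 'I_n.+1).

Definition goodpairs : seq ('I_n.+1 * 'I_n.+1) :=
  [seq a <- enum {: 'I_n.+1 * 'I_n.+1} | a != (j, i)].

Fixpoint W (T : nat) : seq (seq 'I_n.+1) :=
  match T with
  | O => [:: [::]]
  | S T' => [seq u ++ [:: a.1; a.2] | u <- W T', a <- goodpairs]
  end.

Definition Cyl (t : nat) : set (seqspace n) := cylinder (Posz (t.*2.+1)) [:: j; i].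

Definition wd (T : nat) (w : seqspace n) : seq 'I_n.+1 :=
  [seq w (Posz k.+1) | k <- iota 0 (T.*2)].

Lemma CylE t w : Cyl t w <-> w (Posz t.*2.+1) = j /\ w (Posz t.*2.+2) = i.
Proof.
rewrite /Cyl /cylinder /=; split.
  move=> h; split; first by have := h 0%N erefl; rewrite addr0.
  by have := h 1%N erefl; rewrite -PoszD addn1.
case=> h0 h1 [|[|k]] //= _; first by rewrite addr0.
by rewrite -PoszD addn1.
Qed.

Lemma wdS T w : wd T.+1 w = wd T w ++ [:: w (Posz T.*2.+1); w (Posz T.*2.+2)].
Proof.
rewrite /wd doubleS -addn2 iotaD map_cat /= add0n; congr (_ ++ _).
by rewrite addn2.
Qed.

Lemma wd_in T w : (forall t, (t < T)%N -> ~ Cyl t w) -> wd T w \in W T.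
Proof.
elim: T => [|T IH] h; first by rewrite /wd /= inE.
rewrite wdS /=.
apply: (allpairs_f (fun u (a : 'I_n.+1 * 'I_n.+1) => u ++ [:: a.1; a.2])
   (x := wd T w) (y := (w (Posz T.*2.+1), w (Posz T.*2.+2)))).
  by apply: IH => t tT; apply: h; apply: ltnW.
rewrite mem_filter mem_enum andbT; apply/negP => /eqP [e1 e2].
by apply: (h T (ltnSn T)); apply/CylE.
Qed.

Lemma wd_cyl T w : cylinder 1 (wd T w) w.
Proof.
move=> k; rewrite size_map size_iota => kT.
rewrite (nth_map 0%N) ?size_iota // nth_iota // add0n.
Qed.


Lemma sum_good (p : 'I_n.+1 -> R) : \sum_k p k = 1 ->
  \sum_(a <- goodpairs) p a.1 * p a.2 = 1 - p j * p i.
Proof.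
move=> s1; rewrite /goodpairs big_filter big_enum_cond /=.
have : \sum_(a : 'I_n.+1 * 'I_n.+1) p a.1 * p a.2 = 1.
  rewrite -(pair_bigA _ (fun x y => p x * p y)) /=.
  by under eq_bigr => k _ do rewrite -mulr_sumr s1 mulr1.
rewrite (bigD1 (j, i)) //= => h; rewrite -h; ring.
Qed.

Lemma sumW (p : 'I_n.+1 -> R) T : \sum_k p k = 1 ->
  \sum_(u <- W T) \prod_(x <- u) p x = (1 - p j * p i) ^+ T.
Proof.
move=> s1; elim: T => [|T IH]; first by rewrite /= big_cons big_nil big_nil addr0 expr0.
rewrite /= (big_allpairs_dep (h := fun u (a : 'I_n.+1 * 'I_n.+1) => u ++ [:: a.1; a.2])) /=.
rewrite exprS mulrC -IH big_distrl /=; apply: eq_bigr => u _.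
rewrite -sum_good // big_distrr /=; apply: eq_bigr => a _.
by rewrite big_cat /= !big_cons big_nil mulr1.
Qed.

Lemma mem_bigU (T : Type) (F0 : seq 'I_n.+1 -> set T) s u :
  u \in s -> F0 u `<=` \big[setU/set0]_(x <- s) F0 x.
Proof.
elim: s => [//|v s IH]; rewrite inE big_cons => /orP[/eqP ->|us].
  by apply: subsetUl.
by apply: subset_trans (IH us) _; apply: subsetUr.
Qed.

Lemma cyl_meas (m : int) s : measurable (cylinder m s : set (Xmeas n)).
Proof. by apply: sub_sigma_algebra; exists m, s. Qed.

Lemma measure_bigU_le (P : probability (Xmeas n) R) (s : seq (seq 'I_n.+1)) :
 (P (\big[setU/set0]_(u <- s) (cylinder 1 u : set (Xmeas n))) <= \sum_(u <- s) P (cylinder 1 u))%E.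
Proof.
elim: s => [|u s IH]; first by rewrite !big_nil measure0.
rewrite !big_cons; apply: le_trans (measureU2 _ _ _) _.
- exact: cyl_meas.
- by apply: bigsetU_measurable => x _; exact: cyl_meas.
- by rewrite leeD2l.
Qed.

Definition Bset : set (Xmeas n) := \bigcap_t ~` (Cyl t : set (Xmeas n)).

Lemma Bset_meas : measurable Bset.
Proof. by apply: bigcapT_measurable => k; apply: measurableC; exact: cyl_meas. Qed.

Lemma Bset_null (P : probability (Xmeas n) R) (p : 'I_n.+1 -> R) :
  (forall k, 0 < p k) -> \sum_k p k = 1 -> bernoulli_measure p P ->
  P Bset = 0%E.
Proof.
move=> p0 s1 bern.
have ple1 k : p k <= 1.
  by rewrite -s1 (bigD1 k) //= lerDl sumr_ge0 // => x _; exact: ltW.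
set q := p j * p i.
have q0 : 0 < q by rewrite mulr_gt0.
have q1 : q <= 1 by rewrite /q -(mulr1 1) ler_pM // ltW.
have bound T : (P Bset <= ((1 - q) ^+ T)%:E)%E.
  apply: (@le_trans _ _ (P (\big[setU/set0]_(u <- W T) (cylinder 1 u : set (Xmeas n))))).
    apply: le_measure; rewrite ?inE; first exact: Bset_meas.
      by apply: bigsetU_measurable => x _; exact: cyl_meas.
    move=> w Bw; apply: (@mem_bigU _ (fun u => cylinder 1 u) _ (wd T w)).
      by apply: wd_in => t _; exact: Bw.
    exact: wd_cyl.
  apply: le_trans (measure_bigU_le _ _) _.
  rewrite (eq_bigr (fun u => (\prod_(x <- u) p x)%:E)); last by move=> u _; rewrite bern.
  by rewrite sumEFin sumW.
have PB0 : (0 <= P Bset)%E by exact: measure_ge0.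
have PB1 : (P Bset <= 1)%E by apply: probability_le1; exact: Bset_meas.
have fin : P Bset \is a fin_num by rewrite ge0_fin_numE // (le_lt_trans PB1) // ltey.
have hz : `|1 - q| < 1 by rewrite ger0_norm; lra.
have h := cvg_expr hz.
have h0 : fine (P Bset) <= 0.
  apply: (cvgr_to_ge h); apply: nearW => T; by rewrite -lee_fin (fineK fin).
rewrite -(fineK fin); congr (_%:E); apply/le_anti; rewrite h0 fine_ge0 //.
Qed.

End Meas.
Arguments Cyl {n}. Arguments CylE {n}. Arguments Bset {n}. Arguments Bset_meas {n}.
Arguments Bset_null {R n}.

Section Main.
Variable R : realType.

Definition kv (rho : 'rV[R]_2) : 'cV[R]_2 := vec2 (- rho 0 1) (rho 0 0).

Lemma dot_kv rho : dot rho (kv rho) = 0.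
Proof. by rewrite /dot /kv vec2_0 vec2_1; ring. Qed.

Lemma kv_neq0 rho : rho != 0 -> kv rho != 0.
Proof.
move=> /rV2_neq0; rewrite /Nr => h; apply/eqP => e.
have e0 : kv rho 0 0 = 0 by rewrite e mxE.
have e1 : kv rho 1 0 = 0 by rewrite e mxE.
move: e0 e1; rewrite /kv vec2_0 vec2_1 => /eqP; rewrite oppr_eq0 => /eqP e0 e1.
by move: h; rewrite e0 e1 expr0n /= addr0 ltxx.
Qed.

Lemma pdist_self (u : 'cV[R]_2) : pdist u u = 0.
Proof. by rewrite /pdist (mulrC (u 0 0)) subrr normr0 mul0r. Qed.

Lemma pdist_ge0 (u v : 'cV[R]_2) : 0 <= pdist u v.
Proof. by rewrite /pdist divr_ge0 // mulr_ge0 // /enorm sqrtr_ge0. Qed.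

Lemma opnorm0 : opnorm (0 : 'M[R]_2) = 0.
Proof.
rewrite /opnorm.
have -> : [set enorm ((0 : 'M[R]_2) *m v) | v in [set v : 'cV[R]_2 | enorm v = 1]] = [set 0].
  apply/seteqP; split => x /=.
    by case=> v _ <-; rewrite mul0mx enorm0.
  move=> ->; exists (vec2 1 0); last by rewrite mul0mx enorm0.
  by rewrite enormE vec2_0 vec2_1 expr0n /= addr0 expr1n sqrtr1.
exact: sup1.
Qed.

Lemma range_r (r : 'cV[R]_2) (rho : 'rV[R]_2) : rho != 0 ->
  exists x, r = (r *m rho) *m x.
Proof.
move=> /rV2_neq0 h; exists ((Nr rho)^-1 *: rho^T).
rewrite Auv; have -> : dot rho ((Nr rho)^-1 *: rho^T) = 1 by
  rewrite /dot !mxE /Nr; field; rewrite gt_eqF.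
by rewrite scale1r.
Qed.

Lemma row_mx_0 (u v : 'cV[R]_2) a : row_mx u v a 0 = u a 0.
Proof. have -> : (0 : 'I_(1+1)) = lshift 1 0 by exact: val_inj. by rewrite row_mxEl. Qed.
Lemma row_mx_1 (u v : 'cV[R]_2) a : row_mx u v a 1 = v a 0.
Proof. have -> : (1 : 'I_(1+1)) = rshift 1 0 by exact: val_inj. by rewrite row_mxEr. Qed.


Lemma cocycleS n (A : 'I_n.+1 -> 'M[R]_2) w m :
  cocycle A w m.+1 = A (w (Posz m.+1)) *m cocycle A w m.
Proof. by []. Qed.

Lemma cocycle_zero n (A : 'I_n.+1 -> 'M[R]_2) (j i : 'I_n.+1) w t :
  Cyl j i t w -> A i *m A j = 0 -> forall m, cocycle A w (t.*2.+2 + m) = 0.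
Proof.
move=> /CylE [h1 h2] hA; elim=> [|m IH].
  by rewrite addn0 /= h1 h2 mulmxA hA mul0mx.
by rewrite addnS cocycleS IH mulmx0.
Qed.

End Main.
Arguments kv {R}. Arguments dot_kv {R}. Arguments kv_neq0 {R}. Arguments pdist_self {R}.
Arguments pdist_ge0 {R}. Arguments opnorm0 {R}. Arguments range_r {R}. Arguments row_mx_0 {R}.
Arguments row_mx_1 {R}. Arguments cocycleS {R n}. Arguments cocycle_zero {R n A j i w t}.

Theorem theorem4p17 (R : realType) (n : nat) (p : 'I_n.+1 -> R)
  (P : probability (Xmeas n) R) (A : 'I_n.+1 -> 'M[R]_2) :
  (forall i, 0 < p i) -> \sum_i p i = 1 ->
  bernoulli_measure p P ->
  (forall i, \rank (A i) = 1%N) ->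
  (0 < dist_ker_range A /\ proj_unif_hyperbolic A) \/
  [/\ dist_ker_range A = 0, null_word A &
      {ae P, forall w : Xmeas n, lyap_seq A w m @[m --> \oo] --> -oo%E}].
Proof.
move=> p0 s1 bern rk.
have /choice [f hf] : forall k, exists x : 'cV[R]_2 * 'rV[R]_2,
    [/\ x.1 != 0, x.2 != 0 & A k = x.1 *m x.2].
  by move=> k; have [r' [rho' [? ? ?]]] := rank1_fact _ (rk k); exists (r', rho').
pose r k := (f k).1; pose rho k := (f k).2.
have r0 k : r k != 0 by case: (hf k).
have rho0 k : rho k != 0 by case: (hf k).
have HA k : A k = r k *m rho k by case: (hf k).
have lb0 : lbound [set pdist u v | u in [set u : 'cV[R]_2 | u != 0 /\ exists i, A i *m u = 0]
                     & v in [set v : 'cV[R]_2 | v != 0 /\ exists j x, v = A j *m x]] 0.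
  by move=> y [u _ [v _ <-]]; exact: pdist_ge0.
have [[a [b hab]] | nonull] := pselect (exists a b, dot (rho a) (r b) = 0).
- have AA : A a *m A b = 0.
    by rewrite !HA !mulmxA -(mulmxA (r a)) mulrvE mul_mx_scalar hab scale0r mul0mx.
  right; split.
  + apply/le_anti/andP; split; last first.
      apply: lb_le_inf => //.
      have [x hx] := range_r (r b) (rho b) (rho0 b).
      exists (pdist (r b) (r b)), (r b).
        by split => //; exists a; rewrite HA Auv hab scale0r.
      by exists (r b); [split => //; exists b, x; rewrite HA | done].
    have [x hx] := range_r (r b) (rho b) (rho0 b).
    rewrite -(pdist_self (r b)); apply: ge_inf; first by exists 0.
    exists (r b); first by split => //; exists a; rewrite HA Auv hab scale0r.
    by exists (r b) => //; split => //; exists b, x; rewrite HA.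
  + by exists [:: b; a]; rewrite /wordprod /= mulmx1.
  + exists (Bset b a); split; first exact: Bset_meas.
      exact: Bset_null bern.
    move=> w /= nQ t _ Ct; apply: nQ.
    apply: cvg_near_cst; exists t.*2.+2 => //; move=> m /= hm.
    rewrite /lyap_seq -(subnKC hm) (cocycle_zero Ct AA) opnorm0 /elog ltxx mulrNy.
    by rewrite gtr0_sg ?mul1e // invr_gt0 ltr0n.
- have nn k l : dot (rho k) (r l) != 0.
    by apply/eqP => h; apply: nonull; exists k, l.
  pose c (x : 'I_n.+1 * 'I_n.+1) := `|dot (rho x.1) (r x.2)| /
     (Num.sqrt (Nr (rho x.1)) * Num.sqrt (r x.2 0 0 ^+ 2 + r x.2 1 0 ^+ 2)).
  have c0 x : 0 < c x.
    rewrite /c divr_gt0 ?normr_gt0 // mulr_gt0 // sqrtr_gt0.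
      exact: rV2_neq0.
    exact: cV2_neq0.
  left; split.
  + case: (arg_minP c (i0 := (ord0, ord0)) (P := predT) isT) => x _ hx.
    apply: (lt_le_trans (c0 x)); apply: lb_le_inf.
      have [y hy] := range_r (r ord0) (rho ord0) (rho0 ord0).
      exists (pdist (kv (rho ord0)) (r ord0)), (kv (rho ord0)).
        split; first exact: kv_neq0.
        by exists ord0; rewrite HA Auv dot_kv scale0r.
      by exists (r ord0) => //; split => //; exists ord0, y; rewrite HA.
    move=> z [u [u0 [k hk]] [v [v0 [l [y ev]]] <-]]; subst v.
    move: hk v0; rewrite !HA !Auv => /eqP; rewrite scaler_eq0 (negbTE (r0 k)) orbF => /eqP hk.
    rewrite scaler_eq0 (negbTE (r0 l)) orbF => s0.
    rewrite (pdist_formula (rho k) u (r l) _ (rho0 k) u0 (r0 l) s0 hk).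
    exact: (hx (k, l)).
  + exists (fun w => kv (rho (w 1%R))), (fun w => r (w 0%R)); split.
    * by move=> w; split; [exact: kv_neq0 | exact: r0].
    * split=> w eps e0; exists 1%N => w' h; by rewrite h // pdist_self.
    * split=> w.
        by exists 0; rewrite HA Auv dot_kv !scale0r.
      exists (dot (rho (w 1%R)) (r (w 0%R))); by rewrite HA Auv /Defs.shift add0r.
    * move=> w; rewrite det2E !row_mx_0 !row_mx_1 /kv vec2_0 vec2_1.
      have := nn (w 1%R) (w 0%R); rewrite /dot.
      apply: contra => /eqP h; rewrite -oppr_eq0 -h; apply/eqP; ring.
    * exists 1%N => w /=; rewrite mulmx1 /line_norm HA !Auv dot_kv scale0r enorm0 mul0r.
      rewrite divr_gt0 // enorm_gt0 // scaler_eq0 negb_or r0 andbT.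
      exact: nn.
Qed.
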